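(* For all integers $m\ge 2$ and $k\ge 2$, $h(K(m,2,\ldots,2))=ch(K(m,2,\ldots,2))$, where $K(m,2,\ldots,2)$ denotes the complete $k$-partite graph with one part of size $m$ and $k-1$ parts of size $2$.
   Context: All graphs are finite and simple. A list assignment $L$ to a graph $G$ assigns a finite set $L(v)$ to each vertex $v$; a proper $L$-coloring is a map $\psi$ with $\psi(v)\in L(v)$ for all $v$ and $\psi(u)\ne\psi(v)$ for every edge $uv$. The choice number $ch(G)$ is the least $k$ such that $G$ is properly $L$-colorable whenever $|L(v)|\ge k$ for all $v$. For a subgraph $H$ of $G$ and a color $\sigma$, let $H_\sigma$ denote the subgraph of $H$ induced by $\{v\in V(H):\sigma\in L(v)\}$, and let $\alpha$ denote the independence number (with $\alpha$ of the null graph equal to $0$). $G$ and $L$ satisfy Hall's condition if $\sum_{\sigma}\alpha(H_\sigma)\ge |V(H)|$ for every subgraph $H$ of $G$, the sum being over all colors. The Hall number $h(G)$ is the smallest positive integer $k$ such that $G$ has a proper $L$-coloring whenever $G$ and $L$ satisfy Hall's condition and $|L(v)|\ge k$ for every $v\in V(G)$. *)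

(* Defs.v *)
From Stdlib Require Import ClassicalEpsilon.
From mathcomp Require Import all_boot.
Set Implicit Arguments. Unset Strict Implicit. Unset Printing Implicit Defensive.

(* A list assignment
   L : T -> seq nat; the list of v is the finite set of members of L v,
   whose cardinality is size (undup (L v)). *)

Definition simple_graph (T : finType) (e : rel T) : Prop :=
  symmetric e /\ irreflexive e.

Definition list_size (s : seq nat) : nat := size (undup s).

Definition proper_L_coloring (T : finType) (e : rel T) (L : T -> seq nat)
  (psi : T -> nat) : Prop :=
  (forall v, psi v \in L v) /\ (forall u v, e u v -> psi u != psi v).

Definition L_colorable (T : finType) (e : rel T) (L : T -> seq nat) : Prop :=
  exists psi, proper_L_coloring e L psi.

Definition choosable (T : finType) (e : rel T) (k : nat) : Prop :=
  forall L : T -> seq nat, (forall v, k <= list_size (L v)) -> L_colorable e L.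

Definition independent (T : finType) (f : rel T) (B : {set T}) : bool :=
  [forall x in B, forall y in B, ~~ f x y].

Definition alpha (T : finType) (f : rel T) (A : {set T}) : nat :=
  \max_(B : {set T} | (B \subset A) && independent f B) #|B|.

(* All colors appearing in some list. Colors in no list contribute
   alpha(null graph) = 0 to the Hall sum. *)
Definition all_colors (T : finType) (L : T -> seq nat) : seq nat :=
  undup (flatten [seq L v | v <- enum T]).

(* A subgraph H of G is given by a vertex set S and an edge relation f
   contained in e (only edges with both ends in S matter).
   H_sigma is the subgraph of H induced by {v in S | sigma \in L v}. *)
Definition hall_condition (T : finType) (e : rel T) (L : T -> seq nat) : Prop :=
  forall (S : {set T}) (f : rel T), subrel f e ->
    #|S| <= \sum_(sigma <- all_colors L)
              alpha f [set v in S | sigma \in L v].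

Definition hall_good (T : finType) (e : rel T) (k : nat) : Prop :=
  forall L : T -> seq nat, hall_condition e L ->
    (forall v, k <= list_size (L v)) -> L_colorable e L.

Definition is_least (P : nat -> Prop) (n : nat) : Prop :=
  P n /\ forall m, P m -> n <= m.

Definition choice_number (T : finType) (e : rel T) : nat :=
  epsilon (inhabits 0%N) (is_least (choosable e)).

Definition hall_number (T : finType) (e : rel T) : nat :=
  epsilon (inhabits 0%N) (is_least (fun k => 0 < k /\ hall_good e k)).

(* K(m,2,...,2) with k parts: one part 'I_m, and k-1 parts of size 2
   indexed by 'I_(k.-1) * 'I_2. *)
Definition Kvert (m k : nat) : finType := ('I_m + 'I_(k.-1) * 'I_2)%type.

Definition Kpart (m k : nat) (x : Kvert m k) : nat :=
  match x with inl _ => 0 | inr p => (nat_of_ord p.1).+1 end.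

Definition Kedge (m k : nat) : rel (Kvert m k) :=
  fun x y => Kpart x != Kpart y.

(* Main.v *)
Require Import Defs.
From mathcomp Require Import all_boot.
From mathcomp Require Import zify.
From Stdlib Require Import ClassicalEpsilon Classical.
Set Implicit Arguments. Unset Strict Implicit. Unset Printing Implicit Defensive.

Lemma alpha_ge (T : finType) (f : rel T) (A B : {set T}) :
  B \subset A -> independent f B -> #|B| <= alpha f A.
Proof.
move=> sBA iB; rewrite /alpha.
by apply: (leq_bigmax_cond (F := fun B : {set T} => #|B|)); rewrite sBA iB.
Qed.

Lemma indep_sub (T : finType) (f e : rel T) (B : {set T}) :
  subrel f e -> independent e B -> independent f B.
Proof.
move=> sfe /forallP H; apply/forallP => x; apply/implyP => xB.
apply/forallP => y; apply/implyP => yB; apply/negP => fxy.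
have := H x; rewrite xB /= => /forallP /(_ y); rewrite yB /=.
by rewrite (sfe _ _ fxy).
Qed.

Lemma card_sum_cond (T : finType) (A : {set T}) (P : pred T) :
  #|[set v in A | P v]| = \sum_(v in A) (P v : nat).
Proof.
rewrite -sum1_card.
rewrite [RHS]big_mkcond [LHS]big_mkcond /=.
by apply: eq_bigr => v _; rewrite !inE; case: (v \in A); case: (P v).
Qed.

Lemma card_partition_seq (T : finType) (U : eqType) (A : {set T}) (h : T -> U)
  (s : seq U) : uniq s -> (forall v, v \in A -> h v \in s) ->
  #|A| = \sum_(u <- s) #|[set v in A | h v == u]|.
Proof.
move=> us hs.
under eq_bigr => u _ do rewrite card_sum_cond.
rewrite exchange_big /= -sum1_card.
apply: eq_bigr => v vA.
have := count_uniq_mem (h v) us; rewrite (hs v vA) /= => <-.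
rewrite -sum1_count big_mkcond /=.
by apply: eq_bigr => u _; rewrite eq_sym; case: (_ == _).
Qed.

Lemma in_all_colors (T : finType) (L : T -> seq nat) v c :
  c \in L v -> c \in all_colors L.
Proof.
move=> cL; rewrite /all_colors mem_undup; apply/flatten_mapP.
by exists v; rewrite ?mem_enum.
Qed.

Lemma sum_lists (T : finType) (L : T -> seq nat) (S : {set T}) :
  \sum_(c <- all_colors L) #|[set v in S | c \in L v]| =
  \sum_(v in S) list_size (L v).
Proof.
under eq_bigr => c _ do rewrite card_sum_cond.
rewrite exchange_big /=; apply: eq_big => // v _.
rewrite /list_size.
have -> : \sum_(i <- all_colors L) (i \in L v : nat) = count (mem (L v)) (all_colors L).
  by rewrite -sum1_count [RHS]big_mkcond /=; apply: eq_bigr => c _; case: (c \in L v).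
rewrite -size_filter; apply: perm_size; apply: uniq_perm.
- by apply: filter_uniq; apply: undup_uniq.
- exact: undup_uniq.
move=> c; rewrite mem_filter mem_undup /=.
by case cL: (c \in L v) => //=; apply: in_all_colors cL.
Qed.

Lemma hall_at (T : finType) (e f : rel T) (L : T -> seq nat) (S : {set T})
  (I : nat -> {set T}) : subrel f e ->
  (forall c, I c \subset [set v in S | c \in L v]) ->
  (forall c, independent e (I c)) ->
  #|S| <= \sum_(c <- all_colors L) #|I c| ->
  #|S| <= \sum_(c <- all_colors L) alpha f [set v in S | c \in L v].
Proof.
move=> sfe sI iI H; apply: (leq_trans H); apply: leq_sum => c _.
by apply: alpha_ge; [apply: sI | apply: indep_sub sfe (iI c)].
Qed.

Lemma hall_color (T : finType) (e f : rel T) (L : T -> seq nat) (S : {set T})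
  (psi : T -> nat) : subrel f e ->
  (forall u v, e u v -> psi u != psi v) ->
  (forall v, v \in S -> psi v \in L v) ->
  #|S| <= \sum_(c <- all_colors L) alpha f [set v in S | c \in L v].
Proof.
move=> sfe pe pL.
apply: (hall_at (e := e) (I := fun c => [set v in S | psi v == c])) => //.
- move=> c; apply/subsetP => v; rewrite !inE => /andP[vS /eqP <-].
  by rewrite vS pL.
- move=> c; apply/forallP => x; apply/implyP; rewrite inE => /andP[_ /eqP xc].
  apply/forallP => y; apply/implyP; rewrite inE => /andP[_ /eqP yc].
  by apply/negP => exy; have := pe _ _ exy; rewrite xc yc eqxx.
rewrite (card_partition_seq (h := psi) (s := all_colors L)) //.
- exact: undup_uniq.
- by move=> v vS; apply: in_all_colors (pL v vS).
Qed.

Lemma inj_color_set (T : finType) (L : T -> seq nat) :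
  (forall v, #|T| <= list_size (L v)) ->
  forall n (S : {set T}), #|S| = n ->
  exists psi : T -> nat, (forall v, v \in S -> psi v \in L v) /\ {in S &, injective psi}.
Proof.
move=> HL; elim=> [|n IH] S cS.
  exists (fun _ => 0); split => [v|u v].
    by move/card0_eq: cS => ->; rewrite inE.
  by move/card0_eq: cS => ->; rewrite inE.
have [x xS] : exists x, x \in S.
  by apply/set0Pn; apply/negP => /eqP S0; rewrite S0 cards0 in cS.
have cS' : #|S :\ x| = n by rewrite (cardsD1 x S) xS in cS; case: cS.
have [psi [pL pI]] := IH _ cS'.
set U := [seq psi v | v <- enum (S :\ x)].
have : has (fun c => c \notin U) (undup (L x)).
  apply/negPn/negP => /hasPn H.
  have sub : {subset undup (L x) <= U} by move=> c /H; rewrite negbK.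
  have := uniq_leq_size (undup_uniq _) sub.
  rewrite size_map -cardE cS'.
  have := HL x; rewrite /list_size => h1 h2.
  have := leq_trans h1 h2.
  have : #|S| <= #|T| by apply: max_card.
  by rewrite cS => h3 h4; have := leq_trans h3 h4; rewrite ltnn.
case/hasP => c; rewrite mem_undup => cL cU.
exists (fun v => if v == x then c else psi v); split.
  move=> v vS; case: eqP => [-> //|/eqP vx]; apply: pL.
  by rewrite !inE vx.
have inU : forall v, v \in S :\ x -> psi v \in U.
  by move=> v vS; apply: map_f; rewrite mem_enum.
move=> u v uS vS /=.
case: (eqVneq u x) => [-> | ux]; case: (eqVneq v x) => [-> // | vx].
- move=> cv; have : psi v \in U by apply: inU; rewrite !inE vx.
  by rewrite -cv (negbTE cU).
- move=> cu; have : psi u \in U by apply: inU; rewrite !inE ux.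
  by rewrite cu (negbTE cU).
- by apply: pI; rewrite !inE ?ux ?vx.
Qed.

Lemma choosable_card (T : finType) (e : rel T) :
  irreflexive e -> choosable e #|T|.
Proof.
move=> ir L HL.
have [psi [pL pI]] := inj_color_set HL (erefl #|[set: T]|).
exists psi; split => [v|u v euv]; first by apply: pL; rewrite inE.
apply/negP => /eqP puv; have uv := pI u v (in_setT _) (in_setT _) puv.
by rewrite uv ir in euv.
Qed.

Section Spec.
Variables (m K : nat).
Local Notation T := (Kvert m K.+1).
Local Notation e := (@Kedge m K.+1).

Lemma Kpart_lt (v : T) : Kpart v < K.+1.
Proof. by case: v => [a|[i j]] //=; rewrite ltnS ltn_ord. Qed.

Lemma Kedge_irr : irreflexive e.
Proof. by move=> x; rewrite /Kedge eqxx. Qed.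

Lemma indep_part (B : {set T}) p : (forall v, v \in B -> Kpart v = p) ->
  independent e B.
Proof.
move=> H; apply/forallP => x; apply/implyP => xB; apply/forallP => y.
by apply/implyP => yB; rewrite /Kedge H // H // eqxx.
Qed.

Lemma hall_big (L : T -> seq nat) : (forall v, K.+1 <= list_size (L v)) ->
  hall_condition e L.
Proof.
move=> HL S f sfe.
have Hc : forall c, #|[set v in S | c \in L v]| <=
                     K.+1 * alpha f [set v in S | c \in L v].
  move=> c.
  rewrite (card_partition_seq (h := @Kpart m K.+1) (s := index_iota 0 K.+1)).
  - rewrite -[X in X * _](subn0 K.+1) -sum_nat_const_nat.
    apply: leq_sum => p _; apply: alpha_ge; first by apply/subsetP => v; rewrite inE => /andP[].
    apply: indep_sub sfe _; apply: (@indep_part _ p) => v; rewrite inE => /andP[_ /eqP //].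
  - exact: iota_uniq.
  - by move=> v _; rewrite mem_index_iota Kpart_lt.
have : K.+1 * #|S| <= K.+1 * \sum_(c <- all_colors L) alpha f [set v in S | c \in L v].
  rewrite big_distrr /=; apply: leq_trans; last first.
    by apply: leq_sum => c _; exact: Hc.
  rewrite sum_lists -sum1_card big_distrr /=; apply: leq_sum => v _.
  by rewrite muln1 HL.
by rewrite leq_pmul2l.
Qed.

End Spec.

Definition Lbad (m K : nat) (v : Kvert m K.+1) : seq nat :=
  match v with
  | inl i => if val i == 0 then K :: iota 0 K
             else if val i == 1 then K.+1 :: iota 0 K
             else K :: K.+1 :: iota 0 K
  | inr (i, j) => if val j == 0 then iota 0 K else iota K K.+1
  end.

Definition psi2 (m K : nat) (v : Kvert m K.+1) : nat :=
  match v with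
  | inl _ => K
  | inr (i, j) => if val j == 0 then val i else K.+1 + i
  end.

Definition psi1 (m K : nat) (v : Kvert m K.+1) : nat :=
  match v with
  | inl _ => K.+1
  | inr (i, j) => if val j == 0 then val i
                  else if val i == 0 then K else K.+1 + i
  end.

Definition isl (T1 T2 : Type) (v : T1 + T2) : bool :=
  if v is inl _ then true else false.

Lemma ls_ge (s l : seq nat) : uniq s -> {subset s <= l} -> size s <= list_size l.
Proof. by move=> us sl; apply: uniq_leq_size => // x /sl; rewrite mem_undup. Qed.

Section Spec2.
Variables (m K : nat).
Hypothesis hm : 1 < m.
Local Notation T := (Kvert m K.+1).
Local Notation e := (@Kedge m K.+1).

Lemma psi2_proper u v : e u v -> psi2 u != psi2 v.
Proof.
case: u => [a|[i j]]; case: v => [b|[i' j']]; rewrite /Kedge /= ?eqxx //;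
  try have := ltn_ord i; try have := ltn_ord i'; try have := ltn_ord j; try have := ltn_ord j';
  try case: (val j == 0); try case: (val j' == 0); simpl; lia.
Qed.

Lemma psi1_proper u v : e u v -> psi1 u != psi1 v.
Proof.
case: u => [a|[i j]]; case: v => [b|[i' j']]; rewrite /Kedge /= ?eqxx //;
  try have := ltn_ord i; try have := ltn_ord i'; try have := ltn_ord j; try have := ltn_ord j';
  try case: (val j == 0); try case: (val j' == 0);
  try case: (eqVneq (val i) 0); try case: (eqVneq (val i') 0); simpl; lia.
Qed.


Hypothesis hK : 0 < K.
Let a1 : T := inl (Ordinal (ltnW hm)).
Let a2 : T := inl (Ordinal hm).

Lemma psi2_L v : v != a2 -> psi2 v \in Lbad v.
Proof.
case: v => [a|[i j]] /=.
  move=> na; have na1 : val a != 1.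
    by apply: contra na => /eqP E; apply/eqP; congr inl; apply: val_inj.
  by rewrite (negbTE na1); case: ifP => _; rewrite inE eqxx.
move=> _; case: ifP => _; rewrite ?in_cons ?mem_iota; have := ltn_ord i; simpl; lia.
Qed.

Lemma psi1_L v : v != a1 -> psi1 v \in Lbad v.
Proof.
case: v => [a|[i j]] /=.
  move=> na; have na1 : val a != 0.
    by apply: contra na => /eqP E; apply/eqP; congr inl; apply: val_inj.
  rewrite (negbTE na1); case: ifP => _; rewrite !inE eqxx ?orbT //.
move=> _; case: ifP => _; try case: ifP => _; rewrite ?in_cons ?mem_iota; have := ltn_ord i; simpl; lia.
Qed.

Lemma Lbad_noncol : ~ L_colorable e (@Lbad m K).
Proof.
move=> [psi [pL pe]].
have hY : forall a : 'I_m, psi (inl a) \notin iota 0 K.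
  move=> a; apply/negP => Ha.
  pose s := psi (inl a) :: [seq psi (inr (i, ord0)) | i <- enum 'I_K].
  have us : uniq s.
    rewrite /s /= map_inj_uniq ?enum_uniq ?andbT.
      apply/mapP => [[i _ E]].
      by have := pe (inl a) (inr (i, ord0)) isT; rewrite E eqxx.
    move=> i i' E; apply/eqP; apply/negPn/negP => ne.
    have := pe (inr (i, ord0)) (inr (i', ord0)); rewrite /Kedge /= eqSS ne.
    by move=> /(_ isT); rewrite E eqxx.
  have sub : {subset s <= iota 0 K}.
    move=> x; rewrite inE => /orP[/eqP -> //|/mapP [i _ ->]].
    by have := pL (inr (i, ord0)).
  have := uniq_leq_size us sub.
  by rewrite /= size_map size_enum_ord size_iota ltnn.
have p1 : psi a1 = K.
  have := pL a1; rewrite /= inE => /orP[/eqP //|H].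
  by have := hY (Ordinal (ltnW hm)); rewrite H.
have p2 : psi a2 = K.+1.
  have := pL a2; rewrite /= inE => /orP[/eqP //|H].
  by have := hY (Ordinal hm); rewrite H.
pose s := [seq psi (inr (i, ord_max)) | i <- enum 'I_K].
have us : uniq s.
  rewrite /s map_inj_uniq ?enum_uniq //.
  move=> i i' E; apply/eqP; apply/negPn/negP => ne.
  have := pe (inr (i, ord_max)) (inr (i', ord_max)); rewrite /Kedge /= eqSS ne.
  by move=> /(_ isT); rewrite E eqxx.
have sub : {subset s <= iota K.+2 K.-1}.
  move=> x /mapP [i _ Ex].
  have h1 : x \in @Lbad m K (inr (i, ord_max)) by rewrite Ex; exact: (pL (inr (i, ord_max))).
  rewrite /= ?in_cons ?mem_iota in h1.
  have h2 : psi a1 != x by rewrite Ex; exact: (pe a1 (inr (i, ord_max)) isT).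
  rewrite p1 in h2.
  have h3 : psi a2 != x by rewrite Ex; exact: (pe a2 (inr (i, ord_max)) isT).
  rewrite p2 in h3.
  have E : K.+2 + K.-1 = K.+1 + K by move: hK; case: (K) => // n _; rewrite addSnnS.
  rewrite mem_iota E; lia.
have := uniq_leq_size us sub.
rewrite /s size_map size_enum_ord size_iota -subn1; lia.
Qed.


Lemma Lbad_ls v : isl v -> K.+1 <= list_size (@Lbad m K v).
Proof.
case: v => [a|//] _ /=.
have u0 : uniq (K :: iota 0 K) by rewrite /= iota_uniq mem_iota; lia.
case: ifP => _.
  by move: (ls_ge u0 (fun x (h : x \in K :: iota 0 K) => h)); rewrite /= size_iota.
case: ifP => _.
  have u1 : uniq (K.+1 :: iota 0 K) by rewrite /= iota_uniq mem_iota; lia.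
  by move: (ls_ge u1 (fun x (h : x \in K.+1 :: iota 0 K) => h)); rewrite /= size_iota.
have sub : {subset K :: iota 0 K <= K :: K.+1 :: iota 0 K}.
  by move=> x; rewrite !inE => /orP[->|->]; rewrite ?orbT.
by move: (ls_ge u0 sub); rewrite /= size_iota.
Qed.

Lemma Lbad_all v : K <= list_size (@Lbad m K v).
Proof.
case: v => [a|[i j]].
  have := @Lbad_ls (inl a) isT. by move/ltnW.
rewrite /=; case: ifP => _.
  by have := ls_ge (iota_uniq 0 K) (fun x (h : x \in iota 0 K) => h); rewrite size_iota.
have := ls_ge (iota_uniq K K.+1) (fun x (h : x \in iota K K.+1) => h).
by rewrite size_iota => /ltnW.
Qed.

Lemma Lbad_hall : hall_condition e (@Lbad m K).
Proof.
move=> S f sfe.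
case: (boolP (a1 \in S)) => a1S; last first.
  apply: (hall_color (psi := @psi1 m K) sfe psi1_proper) => v vS.
  by apply: psi1_L; apply: contraNneq a1S => <-.
case: (boolP (a2 \in S)) => a2S; last first.
  apply: (hall_color (psi := @psi2 m K) sfe psi2_proper) => v vS.
  by apply: psi2_L; apply: contraNneq a2S => <-.
pose ISL := [set v : T | isl v].
pose SA := S :&: ISL.
apply: (hall_at (e := e) (I := fun c => [set v in SA | c \in Lbad v])) => //.
- move=> c; apply/subsetP => v; rewrite !inE => /andP[/andP[-> _] ->] //.
- move=> c; apply: (@indep_part _ _ _ 0) => v; rewrite !inE.
  by case: v => // x; rewrite andbF.
rewrite sum_lists.
have h1 : #|SA| * K.+1 <= \sum_(v in SA) list_size (Lbad v).
  rewrite -sum_nat_const; apply: leq_sum => v; rewrite !inE => /andP[_ iv].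
  exact: Lbad_ls.
have h2 : #|S| = #|SA| + #|S :\: ISL| by rewrite cardsID.
have h3 : #|S :\: ISL| <= K * 2.
  have -> : K * 2 = #|[set inr p | p : 'I_K * 'I_2] : {set T}|.
    rewrite card_imset; last by move=> x y [].
    by rewrite card_prod !card_ord.
  apply: subset_leq_card; apply/subsetP => v; rewrite !inE.
  case: v => [//|p] _; apply/imsetP; exists p => //.
have h4 : 2 <= #|SA|.
  have <- : #|[set a1; a2]| = 2 by rewrite cards2.
  apply: subset_leq_card; apply/subsetP => v; rewrite !inE.
  by case/orP => /eqP ->; rewrite ?a1S ?a2S.
nia.
Qed.

End Spec2.



Lemma least_ex (P : nat -> Prop) : (exists n, P n) -> exists n, is_least P n.
Proof.
move=> [n Pn]; elim: n {-2}n (leqnn n) Pn => [|N IH] n le Pn.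
  exists n; split => // j _; move: le; rewrite leqn0 => /eqP ->; done.
case: (classic (exists j, j < n /\ P j)) => [[j [lt Pj]]|no].
  by apply: (IH j) => //; lia.
exists n; split => // j Pj; rewrite leqNgt; apply/negP => lt.
by apply: no; exists j.
Qed.

Theorem corollary4 (m k : nat) :
  2 <= m -> 2 <= k ->
  hall_number (@Kedge m k) = choice_number (@Kedge m k).
Proof.
case: k => [|K] // hm hK.
have hK0 : 0 < K by [].
have F1 : forall j, choosable (@Kedge m K.+1) j -> hall_good (@Kedge m K.+1) j.
  by move=> j cj L _ HL; apply: cj.
have F2 : forall j, hall_good (@Kedge m K.+1) j -> K.+1 <= j.
  move=> j hj; rewrite ltnNge; apply/negP => jK.
  apply: (Lbad_noncol hm hK0); apply: hj; first exact: (Lbad_hall hm hK0).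
  by move=> v; apply: leq_trans jK (Lbad_all hm hK0 _).
have F3 : forall j, hall_good (@Kedge m K.+1) j -> choosable (@Kedge m K.+1) j.
  move=> j hj L HL; apply: (hj) => //; apply: hall_big => v.
  exact: leq_trans (F2 _ hj) (HL v).
have F4 := choosable_card (@Kedge_irr m K).
have [ch Hch] : exists n, is_least (choosable (@Kedge m K.+1)) n.
  by apply: least_ex; exists #|Kvert m K.+1|.
have [h Hh] : exists n, is_least (fun k => 0 < k /\ hall_good (@Kedge m K.+1) k) n.
  apply: least_ex; exists #|Kvert m K.+1|; split; last exact: F1.
  exact: leq_trans (F2 _ (F1 _ F4)).
rewrite /hall_number /choice_number.
have := epsilon_spec (inhabits 0) _ (ex_intro _ _ Hch).
have := epsilon_spec (inhabits 0) _ (ex_intro _ _ Hh).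
move: (epsilon _ (is_least _)) (epsilon _ (is_least (choosable _))) => h' ch'.
move=> [[h0 hg] hmin] [cc cmin].
apply/eqP; rewrite eqn_leq; apply/andP; split.
  apply: hmin; split; last exact: F1.
  exact: leq_trans (F2 _ (F1 _ cc)).
by apply: cmin; apply: F3.
Qed.
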